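(* Let $1<p<N$, $q>0$, $\mu>0$, and $g(s)=\frac{(p-1)^{q-p+1}}{\mu^q}(1+\mu s)^{p-1}|\ln(1+\mu s)|^{q-1}\ln(1+\mu s)$ for $s>-1/\mu$. Then for every $r\in(p-1,p)$: (1) if $q\ge p-1$, there exist constants $c_0,c_1>0$ such that $|g(s)|\le c_0|s|^r+c_1|s|^{p-1}$ for all $s>-1/\mu$; (2) if $0<q<p-1$, there exist constants $c_1,c_2>0$ such that $|g(s)|\le c_1|s|^r+c_2|s|^{q}$ for all $s>-1/\mu$. *)

(* Defs.v *)
From HB Require Import structures.
From mathcomp Require Import all_boot all_order all_algebra.
From mathcomp Require Import all_classical all_reals all_analysis.
Set Implicit Arguments. Unset Strict Implicit. Unset Printing Implicit Defensive.
Import Order.TTheory GRing.Theory Num.Theory.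
Local Open Scope ring_scope.

(* Convention: |t|^{q-1} t is read with powR, which
   gives 0 at t = 0 (the continuous extension). *)
Definition gfun (R : realType) (p q mu : R) (s : R) : R :=
  ((p - 1) `^ (q - p + 1) / mu `^ q) * (1 + mu * s) `^ (p - 1)
  * `|ln (1 + mu * s)| `^ (q - 1) * ln (1 + mu * s).

(* Main.v *)
Require Import Defs.
From HB Require Import structures.
From mathcomp Require Import all_boot all_order all_algebra.
From mathcomp Require Import all_classical all_reals all_analysis.
Import Order.TTheory GRing.Theory Num.Theory.
Local Open Scope ring_scope.
From mathcomp Require Import ring lra.
Set Implicit Arguments. Unset Strict Implicit.

Lemma lnle (R : realType) (y e : R) : 0 < y -> e * ln y <= y `^ e - 1.
Proof.
move=> y0; rewrite -ln_powR.
have hp : 0 < y `^ e by apply: powR_gt0.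
have := @le_ln1Dx R (y `^ e - 1).
have E : 1 + (y `^ e - 1) = y `^ e by lra.
rewrite E; apply; lra.
Qed.

Lemma pow_small (R : realType) (a x y : R) : 0 <= a <= 1 -> 0 < x <= y ->
  a `^ y <= a `^ x.
Proof.
move=> /andP[a0 a1] /andP[x0 xy].
have [->|an0] := eqVneq a 0.
  by rewrite powR0 ?powR_ge0 // gt_eqF // (lt_le_trans x0 xy).
by apply: ger_powR => //; rewrite a1 andbT lt_neqAle eq_sym an0.
Qed.

Lemma regA (R : realType) (mu s e : R) : 0 < mu -> - mu^-1 < s -> s < 0 ->
  0 < e <= 1 ->
  (1 + mu * s) `^ e * `|ln (1 + mu * s)| <= (mu * `|s|) / e.
Proof.
move=> mu0 hs s0 /andP[e0 e1].
have hms : -1 < mu * s.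
  have : mu * (- mu^-1) < mu * s by rewrite ltr_pM2l.
  by rewrite mulrN mulfV ?gt_eqF.
have hms0 : mu * s < 0 by rewrite pmulr_rlt0.
set t := 1 + mu * s.
have t0 : 0 < t by rewrite /t; lra.
have t1 : t <= 1 by rewrite /t; lra.
rewrite (ltr0_norm s0) (ltr0_norm (ln_lt0 _)); last by rewrite t0 /t; lra.
have H := @lnle R t (- e) t0.
rewrite powRN in H.
set P := t `^ e in H *.
have P0 : 0 < P by apply: powR_gt0.
have PV : P * P^-1 = 1 by rewrite mulfV ?gt_eqF.
have tP : t <= P by apply: ger1_powR; rewrite ?t0.
rewrite ler_pdivlMr //.
have : P * (P^-1 - 1 - (-e * ln t)) >= 0 by apply: mulr_ge0; lra.
rewrite /t in tP *; nra.
Qed.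

Lemma tpos (R : realType) (mu s : R) : 0 < mu -> - mu^-1 < s -> -1 < mu * s.
Proof.
move=> mu0 hs.
have : mu * (- mu^-1) < mu * s by rewrite ltr_pM2l.
by rewrite mulrN mulfV ?gt_eqF.
Qed.

Lemma regA1 (R : realType) (mu s p q : R) : 0 < mu -> - mu^-1 < s -> s < 0 ->
  1 < p -> 0 < q -> p - 1 <= q ->
  (1 + mu * s) `^ (p - 1) * `|ln (1 + mu * s)| `^ q <=
  ((q / (p - 1)) `^ q * mu `^ (p - 1)) * `|s| `^ (p - 1).
Proof.
move=> mu0 hs s0 p1 q0 pq.
have hms := tpos mu0 hs.
have e0 : 0 < (p - 1) / q by rewrite divr_gt0 // subr_gt0.
have e1 : (p - 1) / q <= 1 by rewrite ler_pdivrMr // mul1r.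
have H := regA mu0 hs s0 (introT andP (conj e0 e1)).
have E : p - 1 = ((p - 1) / q) * q by rewrite mulfVK ?gt_eqF.
have mu0' := ltW mu0.
have sn : 0 <= `|s| by apply: normr_ge0.
have ms0 : 0 <= mu * `|s| by apply: mulr_ge0.
have eV0 : 0 <= ((p - 1) / q)^-1 by rewrite invr_ge0 ltW.
rewrite [in X in X * _ <= _]E powRrM -powRM ?powR_ge0 ?normr_ge0 //.
have t0 : 0 < 1 + mu * s by lra.
have Hx : (1 + mu * s) `^ ((p - 1) / q) * `|ln (1 + mu * s)| \in Num.nneg.
  by rewrite nnegrE mulr_ge0 ?powR_ge0 ?normr_ge0.
have Hy : mu * `|s| / ((p - 1) / q) \in Num.nneg.
  by rewrite nnegrE mulr_ge0.
apply: le_trans (ge0_ler_powR (ltW q0) Hx Hy H) _.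
rewrite powRM // invf_div.
have ms1 : mu * `|s| <= 1 by rewrite ltr0_norm //; lra.
have Hsm : (mu * `|s|) `^ q <= mu `^ (p - 1) * `|s| `^ (p - 1).
  rewrite -powRM //; apply: pow_small.
    by rewrite ms1 ms0.
  by rewrite pq subr_gt0 p1.
have Q0 : 0 <= (q / (p - 1)) `^ q by apply: powR_ge0.
nra.
Qed.

Lemma regA2 (R : realType) (mu s p q : R) : 0 < mu -> - mu^-1 < s -> s < 0 ->
  0 < q -> q <= p - 1 ->
  (1 + mu * s) `^ (p - 1) * `|ln (1 + mu * s)| `^ q <= mu `^ q * `|s| `^ q.
Proof.
move=> mu0 hs s0 q0 pq.
have hms := tpos mu0 hs.
have hms0 : mu * s < 0 by rewrite pmulr_rlt0.
have t0 : 0 < 1 + mu * s by lra.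
have t0' := ltW t0.
have mu0' := ltW mu0.
have sn : 0 <= `|s| by apply: normr_ge0.
have ms0 : 0 <= mu * `|s| by apply: mulr_ge0.
have H := regA mu0 hs s0 (introT andP (conj ltr01 (lexx (1:R)))).
rewrite powRr1 // divr1 in H.
apply: (@le_trans _ _ ((1 + mu * s) `^ q * `|ln (1 + mu * s)| `^ q)).
  rewrite ler_wpM2r ?powR_ge0 //; apply: ger_powR => //.
  by rewrite t0 /=; lra.
rewrite -powRM ?normr_ge0 // -powRM //.
apply: ge0_ler_powR => //; first exact: ltW.
by rewrite nnegrE mulr_ge0 ?normr_ge0.
Qed.

Lemma regB1 (R : realType) (mu s p q : R) : 0 < mu -> 0 < s -> mu * s <= 1 ->
  1 < p -> 0 < q ->
  (1 + mu * s) `^ (p - 1) * `|ln (1 + mu * s)| `^ q <= 2 `^ (p - 1) * (mu * s) `^ q.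
Proof.
move=> mu0 s0 ms1 p1 q0.
have ms0 : 0 < mu * s by rewrite mulr_gt0.
have L0 : 0 <= ln (1 + mu * s) by apply: ln_ge0; lra.
have L1 : ln (1 + mu * s) <= mu * s by apply: le_ln1Dx; lra.
apply: ler_pM; rewrite ?powR_ge0 //.
  by apply: ge0_ler_powR; rewrite ?nnegrE; lra.
by rewrite ger0_norm //; apply: ge0_ler_powR; rewrite ?nnegrE; lra.
Qed.

Lemma regB2 (R : realType) (mu s p q r : R) : 0 < mu -> 0 < s -> 1 <= mu * s ->
  1 < p -> 0 < q -> p - 1 < r ->
  (1 + mu * s) `^ (p - 1) * `|ln (1 + mu * s)| `^ q <=
  ((q / (r - p + 1)) `^ q * (2 * mu) `^ r) * s `^ r.
Proof.
move=> mu0 s0 ms1 p1 q0 pr.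
have ms0 : 0 < mu * s by rewrite mulr_gt0.
have mu0' := ltW mu0.
have s0' := ltW s0.
set t := 1 + mu * s.
have t0 : 0 < t by rewrite /t; lra.
have L0 : 0 <= ln t by apply: ln_ge0; rewrite /t; lra.
set e := (r - p + 1) / q.
have e0 : 0 < e by rewrite divr_gt0 //; lra.
have H := @lnle R t e t0.
have Pt : 0 < t `^ e by apply: powR_gt0.
have HL : ln t <= t `^ e / e by rewrite ler_pdivlMr // mulrC; lra.
have E : r - p + 1 = e * q by rewrite mulfVK ?gt_eqF.
have eV0 : 0 <= e^-1 by rewrite invr_ge0 ltW.
have H1 : `|ln t| `^ q <= t `^ (r - p + 1) * (q / (r - p + 1)) `^ q.
  rewrite (_ : q / (r - p + 1) = e^-1); last by rewrite invf_div.
  rewrite ger0_norm // E powRrM -powRM ?powR_ge0 //.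
  apply: ge0_ler_powR; rewrite ?nnegrE //; first exact: ltW.
  by rewrite mulr_ge0 ?powR_ge0.
have H2 : t `^ (p - 1) * t `^ (r - p + 1) = t `^ r.
  rewrite -powRD; last by rewrite (gt_eqF t0) implybT.
  by rewrite (_ : p - 1 + (r - p + 1) = r) //; ring.
have H3 : t `^ r <= (2 * mu) `^ r * s `^ r.
  have m2 : 0 <= 2 * mu by lra.
  rewrite -powRM //.
  apply: ge0_ler_powR; rewrite ?nnegrE; rewrite /t; try lra.
have T0 : 0 <= t `^ (p - 1) by apply: powR_ge0.
have Q0 : 0 <= (q / (r - p + 1)) `^ q by apply: powR_ge0.
have H4 := ler_wpM2l T0 H1.
rewrite mulrA H2 in H4.
have H5 := ler_wpM2r Q0 H3.
nra.
Qed.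

Lemma gnorm (R : realType) (p q mu s : R) : 0 < q ->
  `|gfun p q mu s| = ((p - 1) `^ (q - p + 1) / mu `^ q) *
     ((1 + mu * s) `^ (p - 1) * `|ln (1 + mu * s)| `^ q).
Proof.
move=> q0; rewrite /gfun.
set K := (p - 1) `^ (q - p + 1) / mu `^ q.
have K0 : 0 <= K by rewrite divr_ge0 ?powR_ge0.
clearbody K.
rewrite !normrM (ger0_norm K0) (ger0_norm (powR_ge0 _ _)) (ger0_norm (powR_ge0 _ _)).
rewrite -(mulr_powRB1 (normr_ge0 (ln (1 + mu * s))) q0); ring.
Qed.

Theorem lemma2p2 (R : realType) (N : nat) (p q mu : R)
  (hp1 : 1 < p) (hpN : p < N%:R) (hq : 0 < q) (hmu : 0 < mu) :
  forall r : R, p - 1 < r -> r < p ->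
  (p - 1 <= q ->
     exists c0 c1 : R, 0 < c0 /\ 0 < c1 /\
       forall s : R, - mu^-1 < s ->
         `|gfun p q mu s| <= c0 * `|s| `^ r + c1 * `|s| `^ (p - 1)) /\
  (q < p - 1 ->
     exists c1 c2 : R, 0 < c1 /\ 0 < c2 /\
       forall s : R, - mu^-1 < s ->
         `|gfun p q mu s| <= c1 * `|s| `^ r + c2 * `|s| `^ q).
Proof.
move=> r hr1 hr2.
set K := (p - 1) `^ (q - p + 1) / mu `^ q.
have K0 : 0 < K by rewrite divr_gt0 ?powR_gt0 // subr_gt0.
set A := (q / (r - p + 1)) `^ q * (2 * mu) `^ r.
have A0 : 0 < A.
  rewrite mulr_gt0 ?powR_gt0 //; last by rewrite mulr_gt0.
  by rewrite divr_gt0 //; lra.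
have two0 : 0 < 2 `^ (p - 1) :> R by rewrite powR_gt0.
have mu0' := ltW hmu.
have zero_case : forall x B : R, 0 <= B -> 0 < x ->
    (1 + mu * 0) `^ (p - 1) * `|ln (1 + mu * 0)| `^ q <=
    A * `|0 : R| `^ r + B * `|0 : R| `^ x.
  move=> x B B0 x0.
  rewrite mulr0 addr0 ln1 normr0 powR0 ?gt_eqF // mulr0.
  by rewrite addr_ge0 // mulr_ge0 ?powR_ge0 // ltW.
split => hcase.
- set B := (q / (p - 1)) `^ q * mu `^ (p - 1) + 2 `^ (p - 1) * mu `^ (p - 1).
  have B0 : 0 < B.
    rewrite addr_gt0 // mulr_gt0 ?powR_gt0 //.
    by rewrite divr_gt0 //; lra.
  exists (K * A), (K * B); split; first exact: mulr_gt0.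
  split; first exact: mulr_gt0.
  move=> s hs; rewrite gnorm // -/K -(mulrA K A) -(mulrA K B) -mulrDr ler_wpM2l ?(ltW K0) //.
  have SA : 0 <= A * `|s| `^ r by rewrite mulr_ge0 ?powR_ge0 // ltW.
  have [s0|s0|->] := ltgtP s 0; last by apply: zero_case; rewrite ?(ltW B0) // subr_gt0.
  + have H := regA1 hmu hs s0 hp1 hq hcase.
    have S0 : 0 <= 2 `^ (p - 1) * mu `^ (p - 1) * `|s| `^ (p - 1).
      by rewrite !mulr_ge0 ?powR_ge0.
    rewrite /B; lra.
  + rewrite (gtr0_norm s0).
    have [ms1|ms1] := lerP (mu * s) 1.
    * have H := regB1 hmu s0 ms1 hp1 hq.
      have Hsm : (mu * s) `^ q <= mu `^ (p - 1) * s `^ (p - 1).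
        rewrite -powRM ?(ltW s0) //; apply: pow_small.
          by rewrite ms1 mulr_ge0 // ltW.
        by rewrite hcase subr_gt0 hp1.
      have H' := ler_wpM2l (ltW two0) Hsm.
      have S0 : 0 <= (q / (p - 1)) `^ q * mu `^ (p - 1) * s `^ (p - 1).
        by rewrite !mulr_ge0 ?powR_ge0.
      rewrite (gtr0_norm s0) in SA.
      rewrite /B; nra.
    * have H := regB2 hmu s0 (ltW ms1) hp1 hq hr1.
      have S0 : 0 <= B * s `^ (p - 1) by rewrite mulr_ge0 ?powR_ge0 // ltW.
      rewrite -/A in H; lra.
- set B := mu `^ q + 2 `^ (p - 1) * mu `^ q.
  have B0 : 0 < B by rewrite addr_gt0 ?mulr_gt0 ?powR_gt0.
  exists (K * A), (K * B); split; first exact: mulr_gt0.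
  split; first exact: mulr_gt0.
  move=> s hs; rewrite gnorm // -/K -(mulrA K A) -(mulrA K B) -mulrDr ler_wpM2l ?(ltW K0) //.
  have SA : 0 <= A * `|s| `^ r by rewrite mulr_ge0 ?powR_ge0 // ltW.
  have [s0|s0|->] := ltgtP s 0; last by apply: zero_case; rewrite ?(ltW B0).
  + have H := regA2 hmu hs s0 hq (ltW hcase).
    have S0 : 0 <= 2 `^ (p - 1) * mu `^ q * `|s| `^ q.
      by rewrite !mulr_ge0 ?powR_ge0.
    rewrite /B; lra.
  + rewrite (gtr0_norm s0).
    have [ms1|ms1] := lerP (mu * s) 1.
    * have H := regB1 hmu s0 ms1 hp1 hq.
      rewrite powRM ?(ltW s0) // in H.
      have S0 : 0 <= mu `^ q * s `^ q by rewrite mulr_ge0 ?powR_ge0.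
      rewrite (gtr0_norm s0) in SA.
      rewrite /B; nra.
    * have H := regB2 hmu s0 (ltW ms1) hp1 hq hr1.
      have S0 : 0 <= B * s `^ q by rewrite mulr_ge0 ?powR_ge0 // ltW.
      rewrite -/A in H; lra.
Qed.
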